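(* Let $A$ be a finite alphabet and $n\ge1$. The $n$-ball subshift $\mathbb F^{[n]}\curvearrowright\mathcal C^{[n]}$ of the full convex shift $\mathbb F(A)\curvearrowright\mathcal C(A)$ is $1$-step (as a convex subshift over the alphabet $A^{[n]}$).
   Context: Convex subshifts. Let $A$ be a finite alphabet, $\mathbb F=\mathbb F(A)$. $\mathcal C=\mathcal C(A)$ is the set of subsets $\xi\subseteq\mathbb F$ with $1\in\xi$ that are right-convex: whenever a reduced word $a_m^{\varepsilon_m}\cdots a_1^{\varepsilon_1}$ ($a_i\in A$, $\varepsilon_i=\pm1$) lies in $\xi$, so does $a_k^{\varepsilon_k}\cdots a_1^{\varepsilon_1}$ for all $k<m$; topology from $\{0,1\}^{\mathbb F}$. Full convex shift: partial action of $\mathbb F$ on $\mathcal C$ with domains $\mathcal C_\alpha=\{\xi:\alpha^{-1}\in\xi\}$, $\alpha.\xi=\xi\alpha^{-1}$ for $\alpha\in\xi$. A convex subshift is the restriction to a closed invariant $\Omega\subseteq\mathcal C$. An $n$-ball is $B\in\mathcal C$ with all $|\alpha|\le n$, together with radius $n$; $\xi^n=\{\alpha\in\xi:|\alpha|\le n\}$; $\mathcal B_n(\Omega)=\{\xi^n:\xi\in\Omega\}$. For an $n$-ball $B$, $\xi\not\equiv B$ means $(\alpha.\xi)^n\ne B$ for all $\alpha\in\xi$; $\Omega^{\mathcal F}=\{\xi\in\mathcal C:\xi\not\equiv B\ \forall B\in\mathcal F\}$. $\Omega$ is $R$-step if $\Omega=\Omega^{\mathcal F}$ for a finite set $\mathcal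 F$ of $R$-balls (equivalently, $\xi\in\mathcal C$ lies in $\Omega$ iff $(\alpha.\xi)^R\in\mathcal B_R(\Omega)$ for all $\alpha\in\xi$). $n$-ball subshift: for a convex subshift $\Omega$, let $A^{[n:\Omega]}$ be the finite set of formal symbols $[(a.\xi)^n\xleftarrow{a}\xi^n]$ with $\xi\in\Omega$, $a\in A$, $a\in\xi$ (a symbol $[B\xleftarrow{a}B']$ is determined by the triple $(B,a,B')$), and set $[B'\xleftarrow{a^{-1}}B]:=[B\xleftarrow{a}B']^{-1}$ in the free group $\mathbb F^{[n:\Omega]}=\mathbb F(A^{[n:\Omega]})$. For $\xi\in\Omega$ and $\alpha=s_m\cdots s_1\in\xi$ reduced ($s_i\in A\cup A^{-1}$), put $B_k=((s_k\cdots s_1).\xi)^n$ and $\phi_n(\xi,\alpha)=[B_m\xleftarrow{s_m}B_{m-1}]\cdots[B_1\xleftarrow{s_1}B_0]$, $\phi_n(\xi,1)=1$, $\phi_n(\xi)=\{\phi_n(\xi,\alpha):\alpha\in\xi\}\in\mathcal C(A^{[n:\Omega]})$. The $n$-ball subshift $\theta^{[n]}$ is the restriction of the full convex shift on $A^{[n:\Omega]}$ to $\Omega^{[n]}:=\phi_n(\Omega)$ (a convex subshift). For $\Omega=\mathcal C$ write $A^{[n]}$, $\mathbb F^{[n]}$, $\mathcal C^{[n]}$. *)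

(* Defs.v *)
From mathcomp Require Import all_boot.
From Stdlib Require Import ClassicalEpsilon.
Set Implicit Arguments. Unset Strict Implicit. Unset Printing Implicit Defensive.

(* A letter (a, true) is a, (a, false) is a^-1.
   A word a_m^{e_m} ... a_1^{e_1} is the list [:: s_m; ...; s_1]
   (written order: head = leftmost letter s_m). *)
Definition letter (L : Type) := (L * bool)%type.
Definition word (L : Type) := seq (letter L).
Definition inv_letter (L : Type) (x : letter L) : letter L := (x.1, ~~ x.2).

Definition cdec (T : Type) (x y : T) : bool :=
  if excluded_middle_informative (x = y) then true else false.

Fixpoint reduce (L : Type) (w : word L) : word L :=
  match w with
  | [::] => [::]
  | x :: w' =>
      match reduce w' with
      | y :: w'' => if cdec x (inv_letter y) then w'' else x :: y :: w''
      | [::] => [:: x]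
      end
  end.

Definition reduced (L : Type) (w : word L) : Prop := reduce w = w.

Definition fmul (L : Type) (u v : word L) : word L := reduce (u ++ v).

Definition subset (L : Type) := word L -> Prop.
Definition seteq (L : Type) (X Y : subset L) : Prop := forall w, X w <-> Y w.

(* xi \in C(L): xi ⊆ F, 1 \in xi, right-convex (a_m..a_1 \in xi => a_k..a_1 \in xi) *)
Definition convex (L : Type) (xi : subset L) : Prop :=
  [/\ (forall w, xi w -> reduced w),
      xi [::] &
      (forall x w, xi (x :: w) -> xi w)].

(* alpha.xi = xi alpha^{-1} = { gamma in F : gamma alpha \in xi } (meant for alpha \in xi) *)
Definition act (L : Type) (alpha : word L) (xi : subset L) : subset L :=
  fun gamma => reduced gamma /\ xi (fmul gamma alpha).

Definition ball (L : Type) (n : nat) (xi : subset L) : subset L :=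
  fun gamma => xi gamma /\ size gamma <= n.

Definition is_ball (L : Type) (n : nat) (B : subset L) : Prop :=
  convex B /\ (forall w, B w -> size w <= n).

Definition avoids (L : Type) (n : nat) (xi B : subset L) : Prop :=
  forall alpha, xi alpha -> ~ seteq (ball n (act alpha xi)) B.

Definition OmegaF (L : Type) (n : nat) (Fs : seq (subset L)) : subset L -> Prop :=
  fun xi => convex xi /\ (forall B, List.In B Fs -> avoids n xi B).

Definition is_step (L : Type) (R : nat) (Omega : subset L -> Prop) : Prop :=
  exists Fs : seq (subset L),
    (forall B, List.In B Fs -> is_ball R B) /\
    (forall xi, Omega xi <-> OmegaF R Fs xi).

(* symbol [B <-a- B'] with B = (a.xi)^n, B' = xi^n, xi \in C, a \in xi *)
Record ball_sym (A : Type) (n : nat) := BallSym {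
  bs_B : subset A;
  bs_a : A;
  bs_B' : subset A;
  bs_valid : exists xi : subset A,
      [/\ convex xi, xi [:: (bs_a, true)],
          bs_B = ball n (act [:: (bs_a, true)] xi) &
          bs_B' = ball n xi]
}.

(* the letter x of F^[n] equals [B <-s- B'], where [B' <-a^-1- B] := [B <-a- B']^-1 *)
Definition sym_is (A : Type) (n : nat) (x : letter (ball_sym A n))
    (B : subset A) (s : letter A) (B' : subset A) : Prop :=
  if s.2 then
    [/\ x.2 = true, bs_B x.1 = B, bs_a x.1 = s.1 & bs_B' x.1 = B']
  else
    [/\ x.2 = false, bs_B x.1 = B', bs_a x.1 = s.1 & bs_B' x.1 = B].

(* phi_rel xi alpha w : w = phi_n(xi, alpha), for alpha = s_m..s_1 :
   w = [B_m <-s_m- B_{m-1}] ... [B_1 <-s_1- B_0], B_k = ((s_k..s_1).xi)^n *)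
Fixpoint phi_rel (A : Type) (n : nat) (xi : subset A)
    (alpha : word A) (w : word (ball_sym A n)) : Prop :=
  match alpha, w with
  | [::], [::] => True
  | s :: alpha', x :: w' =>
      @phi_rel A n xi alpha' w' /\
      sym_is x (ball n (act (s :: alpha') xi)) s (ball n (act alpha' xi))
  | _, _ => False
  end.

Definition phi (A : Type) (n : nat) (xi : subset A) : subset (ball_sym A n) :=
  fun w => exists alpha, xi alpha /\ @phi_rel A n xi alpha w.

Definition Cn (A : Type) (n : nat) : subset (ball_sym A n) -> Prop :=
  fun psi => exists xi : subset A, convex xi /\ seteq psi (@phi A n xi).

(* Main.v *)
Require Import Defs.
From mathcomp Require Import all_boot.
From Stdlib Require Import ClassicalEpsilon FunctionalExtensionality PropExtensionality ProofIrrelevance Classical.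
From Stdlib Require Import Lia.
From mathcomp Require Import zify.
Set Implicit Arguments. Unset Strict Implicit. Unset Printing Implicit Defensive.

Lemma cdec_eq (T : Type) (x : T) : cdec x x = true.
Proof. by rewrite /cdec; case: excluded_middle_informative. Qed.
Lemma cdec_neq (T : Type) (x y : T) : x <> y -> cdec x y = false.
Proof. by rewrite /cdec; case: excluded_middle_informative. Qed.
Lemma cdec_true (T : Type) (x y : T) : cdec x y = true -> x = y.
Proof. by rewrite /cdec; case: excluded_middle_informative. Qed.

Lemma inv_inv (L : Type) (x : letter L) : inv_letter (inv_letter x) = x.
Proof. by case: x => a b; rewrite /inv_letter /= negbK. Qed.

Definition comb (L : Type) (x : letter L) (r : word L) : word L :=
  match r with
  | y :: r' => if cdec x (inv_letter y) then r' else x :: y :: r'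
  | [::] => [:: x]
  end.

Lemma reduce_cons (L : Type) (x : letter L) w : reduce (x :: w) = comb x (reduce w).
Proof. by []. Qed.

Lemma size_reduce (L : Type) (w : word L) : size (reduce w) <= size w.
Proof.
elim: w => [//|x w IH]; rewrite reduce_cons /=.
case E: (reduce w) => [|y r] //=; rewrite E /= in IH.
case: (cdec _ _) => /=; lia.
Qed.

Lemma reduced_tail (L : Type) (y : letter L) r : reduced (y :: r) -> reduced r.
Proof.
rewrite /reduced reduce_cons.
have := size_reduce r.
case E: (reduce r) => [|z r''] /=.
  by move=> _ [->].
case: (cdec _ _) => /=.
  move=> Hs Heq; have := f_equal size Heq; rewrite /=; lia.
by move=> _ [<-].
Qed.

Lemma reduced_cons (L : Type) (x : letter L) w :
  reduced (x :: w) <-> reduced w /\ (forall y w', w = y :: w' -> x <> inv_letter y).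
Proof.
split.
  move=> H; have Hw := reduced_tail H; split=> // y w' Ew Ex.
  move: H; rewrite /reduced reduce_cons Hw Ew /= Ex cdec_eq => Heq.
  have := f_equal size Heq; rewrite /=; lia.
case=> Hw Hh; rewrite /reduced reduce_cons Hw.
case: w Hw Hh => [//|y w'] Hw Hh /=.
by rewrite cdec_neq //; apply: Hh.
Qed.

Lemma reduced_nil (L : Type) : reduced (@nil (letter L)).
Proof. by []. Qed.

Lemma reduced1 (L : Type) (x : letter L) : reduced [:: x].
Proof. by []. Qed.

Lemma comb_reduced (L : Type) (x : letter L) r : reduced r -> reduced (comb x r).
Proof.
case: r => [//|y r'] H /=.
case E: (cdec x (inv_letter y)); first exact: reduced_tail H.
apply/reduced_cons; split=> // z w [<- _] Ex.
by rewrite Ex cdec_eq in E.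
Qed.

Lemma reduce_reduced (L : Type) (w : word L) : reduced (reduce w).
Proof. elim: w => [//|x w IH]; rewrite reduce_cons; exact: comb_reduced. Qed.

Lemma reduceK (L : Type) (w : word L) : reduce (reduce w) = reduce w.
Proof. exact: reduce_reduced. Qed.

Lemma comb_inv (L : Type) (x : letter L) r : reduced r -> comb x (comb (inv_letter x) r) = r.
Proof.
case: r => [|y r'] H /=.
  by rewrite inv_inv cdec_eq.
case: (classic (x = y)) => [Exy|Hxy].
  subst y; rewrite cdec_eq.
  case: r' H => [|z r''] H /=; first by [].
  rewrite cdec_neq //; move/reduced_cons: H => [_ H]; exact: (H z r'').
rewrite cdec_neq; last first.
  by move=> E; apply: Hxy; rewrite -(inv_inv x) -(inv_inv y) E.
by rewrite /= inv_inv cdec_eq.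
Qed.

Lemma reduce_cat (L : Type) (u v : word L) : reduce (u ++ v) = foldr (@comb L) (reduce v) u.
Proof. by elim: u => [//|x u IH]; rewrite cat_cons reduce_cons IH. Qed.

Lemma foldr_comb_reduced (L : Type) (r u : word L) : reduced r -> reduced (foldr (@comb L) r u).
Proof. move=> Hr; elim: u => [//|x u IH] /=; exact: comb_reduced. Qed.

Lemma foldr_comb_comb (L : Type) (r s : word L) x : reduced r -> reduced s ->
  foldr (@comb L) r (comb x s) = comb x (foldr (@comb L) r s).
Proof.
move=> Hr; case: s => [//|y s'] Hs /=.
case E: (cdec x (inv_letter y)) => //.
rewrite (cdec_true E).
have H := @comb_inv L (inv_letter y) (foldr (@comb L) r s'); rewrite inv_inv in H.
by rewrite H //; apply: foldr_comb_reduced.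
Qed.

Lemma foldr_comb_reduce (L : Type) (r u : word L) : reduced r ->
  foldr (@comb L) r (reduce u) = foldr (@comb L) r u.
Proof.
move=> Hr; elim: u => [//|x u IH].
rewrite reduce_cons foldr_comb_comb; [exact: (f_equal (comb x) IH) | done | exact: reduce_reduced].
Qed.

Lemma reduce_catr (L : Type) (u v : word L) : reduce (u ++ reduce v) = reduce (u ++ v).
Proof. by rewrite !reduce_cat reduceK. Qed.

Lemma reduce_catl (L : Type) (u v : word L) : reduce (reduce u ++ v) = reduce (u ++ v).
Proof. by rewrite !reduce_cat foldr_comb_reduce //; exact: reduce_reduced. Qed.

Lemma reduced_cat_r (L : Type) (u v : word L) : reduced (u ++ v) -> reduced v.
Proof. elim: u => [//|x u IH] /= H; apply: IH; exact: reduced_tail H. Qed.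

Lemma reduced_rcons (L : Type) (u : word L) s : reduced (rcons u s) -> reduced u.
Proof.
elim: u => [//|x u IH] /= /reduced_cons [H1 H2].
apply/reduced_cons; split; first exact: IH.
move=> y w' Eu; apply: (H2 y (rcons w' s)); by rewrite Eu.
Qed.

Lemma reduced_rcons_cat (L : Type) (u v : word L) s :
  reduced (rcons u s) -> reduced (s :: v) -> reduced (rcons u s ++ v).
Proof.
elim: u => [//|x u IH] /= /reduced_cons [H1 H2] Hv.
apply/reduced_cons; split; first exact: IH.
case: u {IH H1} H2 => [|z u] H2 y w' /= [<- _]; apply: H2 => //.
Qed.

Lemma convex_suffix (L : Type) (xi : Defs.subset L) p r : convex xi -> xi (p ++ r) -> xi r.
Proof. case=> _ _ H; elim: p => [//|x p IH] /= Hx; apply: IH; exact: H Hx. Qed.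

Lemma reduce_cat_cases (L : Type) (w al : word L) : reduced w -> reduced al ->
  (exists p, al = p ++ reduce (w ++ al)) \/
  (exists x w' r, w = x :: w' /\ reduce (w ++ al) = x :: r).
Proof.
move=> Hw Hal; elim: w Hw => [|x w' IH] Hw.
  by left; exists [::]; rewrite /= Hal.
have Hw' := reduced_tail Hw.
case: (IH Hw') => [[p Ep]|[x' [w'' [r [Ew Er]]]]]; rewrite cat_cons reduce_cons.
  case E: (reduce (w' ++ al)) Ep => [|y r'] Ep /=.
    by right; exists x, w', [::].
  case C: (cdec x (inv_letter y)).
    by left; exists (p ++ [:: y]); rewrite -catA.
  by right; exists x, w', (y :: r').
rewrite Er /= cdec_neq; first by right; exists x, w', (x' :: r).
by move/reduced_cons: Hw => [_ H]; apply: H Ew.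
Qed.

Lemma convex_act (L : Type) (xi : Defs.subset L) al : convex xi -> xi al -> convex (act al xi).
Proof.
move=> Hc Hal; have [Hr H0 Hs] := Hc.
split.
- by move=> w [].
- by split => //=; rewrite /fmul /= Hr.
move=> x w [Hxw]; rewrite /fmul => H; split; first exact: reduced_tail Hxw.
have Hw := reduced_tail Hxw.
case: (reduce_cat_cases Hw (Hr _ Hal)) => [[p Ep]|[x' [w' [r [Ew Er]]]]].
  by rewrite Ep in Hal; exact: convex_suffix Hc Hal.
move: H; rewrite cat_cons reduce_cons Er /= cdec_neq; first by rewrite /fmul Er; move/Hs.
by move/reduced_cons: Hxw => [_ H']; apply: H' Ew.
Qed.

Lemma act_act (L : Type) (xi : Defs.subset L) u v : act u (act v xi) = act (fmul u v) xi.
Proof.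
apply: functional_extensionality => g; apply: propositional_extensionality.
rewrite /act /fmul reduce_catl reduce_catr catA; split.
  by case=> ? [].
by case=> ? ?; split => //; split => //; exact: reduce_reduced.
Qed.

Lemma act_nil (L : Type) (xi : Defs.subset L) : convex xi -> act [::] xi = xi.
Proof.
case=> Hr _ _; apply: functional_extensionality => g; apply: propositional_extensionality.
rewrite /act /fmul cats0; split; first by case=> H; rewrite H.
by move=> H; have E := Hr _ H; rewrite E.
Qed.

Definition pi (A : Type) (n : nat) (y : letter (ball_sym A n)) : letter A := (bs_a y.1, y.2).
Definition src (A : Type) (n : nat) (y : letter (ball_sym A n)) : Defs.subset A :=
  if y.2 then bs_B' y.1 else bs_B y.1.
Definition tgt (A : Type) (n : nat) (y : letter (ball_sym A n)) : Defs.subset A :=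
  if y.2 then bs_B y.1 else bs_B' y.1.

Lemma sym_isE (A : Type) (n : nat) (y : letter (ball_sym A n)) B s B' :
  sym_is y B s B' <-> [/\ pi y = s, tgt y = B & src y = B'].
Proof.
case: y => r b; case: s => a c; rewrite /sym_is /pi /tgt /src /=.
case: c; case: b => /=; split.
- by case=> _ -> -> ->.
- by case=> [[->]] -> ->.
- by case.
- by case=> [[_]].
- by case.
- by case=> [[_]].
- by case=> _ -> -> ->.
- by case=> [[->]] -> ->.
Qed.

Lemma letter_ext (A : Type) (n : nat) (y z : letter (ball_sym A n)) :
  pi y = pi z -> tgt y = tgt z -> src y = src z -> y = z.
Proof.
case: y => [[B a B' p] b]; case: z => [[C a' C' q] b'].
rewrite /pi /tgt /src /= => [[Ea Eb]]; subst a' b'.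
case: b => /= E1 E2; subst; by rewrite (proof_irrelevance _ p q).
Qed.

Lemma pi_inv (A : Type) (n : nat) (y : letter (ball_sym A n)) :
  pi (inv_letter y) = inv_letter (pi y).
Proof. by []. Qed.
Lemma tgt_inv (A : Type) (n : nat) (y : letter (ball_sym A n)) : tgt (inv_letter y) = src y.
Proof. by case: y => r []. Qed.
Lemma src_inv (A : Type) (n : nat) (y : letter (ball_sym A n)) : src (inv_letter y) = tgt y.
Proof. by case: y => r []. Qed.

Lemma phi_rel_map (A : Type) (n : nat) xi al (w : word (ball_sym A n)) :
  phi_rel xi al w -> map (@pi A n) w = al.
Proof.
elim: al w => [|s al IH] [|y w] //= [H1 /sym_isE [H2 _ _]].
by rewrite H2 (IH _ H1).
Qed.

Lemma phi_rel_uniq (A : Type) (n : nat) xi al (w w' : word (ball_sym A n)) :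
  phi_rel xi al w -> phi_rel xi al w' -> w = w'.
Proof.
elim: al w w' => [|s al IH] [|y w] [|y' w'] //= [H1 /sym_isE [H2 H3 H4]] [H1' /sym_isE [H2' H3' H4']].
rewrite (IH _ _ H1 H1'); congr (_ :: _); apply: letter_ext; congruence.
Qed.

Lemma phi_rel_reduced (A : Type) (n : nat) xi al (w : word (ball_sym A n)) :
  phi_rel xi al w -> reduced al -> reduced w.
Proof.
elim: al w => [|s al IH] [|y w] //= [H1 H2] Hal.
have Hal' := reduced_tail Hal.
apply/reduced_cons; split; first exact: IH.
move=> z w' Ew Ey.
move/reduced_cons: Hal => [_ Hh].
have Em := phi_rel_map H1; rewrite Ew /= in Em.
move/sym_isE: H2 => [Hp _ _].
apply: (Hh (pi z) [seq pi i | i <- w']); first by rewrite -Em.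
by rewrite -Hp Ey.
Qed.

Lemma phi_convex (A : Type) (n : nat) (xi : Defs.subset A) : convex xi -> convex (@phi A n xi).
Proof.
move=> Hc; have [Hr H0 Hs] := Hc; split.
- move=> w [al [Hal Hw]]; apply: phi_rel_reduced Hw _; exact: Hr.
- by exists [::].
move=> x w [[|s al] [Hal //= [H1 _]]].
by exists al; split => //; exact: Hs Hal.
Qed.

Lemma phi1 (A : Type) (n : nat) (xi : Defs.subset A) y :
  @phi A n xi [:: y] <-> xi [:: pi y] /\ tgt y = ball n (act [:: pi y] xi) /\ src y = ball n (act [::] xi).
Proof.
split.
  move=> [al [Hal Hw]]; case: al Hal Hw => [|s [|? ?]] //= Hal; last by case.
  by case=> _ /sym_isE [H1 H2 H3]; subst s; split; [|split].
move=> [H1 [H2 H3]]; exists [:: pi y]; split => //=; split => //.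
by apply/sym_isE.
Qed.

Lemma phi_cons (A : Type) (n : nat) (xi : Defs.subset A) al beta y :
  phi_rel xi al beta ->
  (@phi A n xi (y :: beta) <->
   xi (pi y :: al) /\ tgt y = ball n (act (pi y :: al) xi) /\ src y = ball n (act al xi)).
Proof.
move=> Hb; split.
  move=> [[|s al'] [Hal //= [H1 /sym_isE [H2 H3 H4]]]].
  have E := phi_rel_map H1; rewrite (phi_rel_map Hb) in E; subst al' s.
  by split; [|split].
move=> [H1 [H2 H3]]; exists (pi y :: al); split => //=; split => //.
by apply/sym_isE.
Qed.

Lemma fmul1 (L : Type) (y : letter L) w : reduced w -> fmul [:: y] w = comb y w.
Proof. by move=> H; rewrite /fmul cat1s reduce_cons H. Qed.

Lemma fmul0 (L : Type) (w : word L) : reduced w -> fmul [::] w = w.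
Proof. by move=> H; rewrite /fmul cat0s H. Qed.

Lemma act1 (L : Type) (xi : Defs.subset L) al s : reduced al -> act al xi [:: s] = xi (comb s al).
Proof.
move=> H; apply: propositional_extensionality; rewrite /act (fmul1 _ H).
by split; [case | split; first exact: reduced1].
Qed.

Lemma phi_local_key (A : Type) (n : nat) (xi : Defs.subset A) al beta y :
  convex xi -> xi al -> phi_rel xi al beta ->
  (@phi A n (act al xi) [:: y] <-> phi xi (comb y beta)).
Proof.
move=> Hc Hal Hb.
have [Hr H0 Hs] := Hc.
have Har := Hr _ Hal.
rewrite phi1 !act_act (fmul1 _ Har) (fmul0 Har) act1 //.
case: beta al Hb Hal Har => [|z beta'] [|t al'] Hb Hal Har //=.
  by rewrite phi1.
case: Hb => Hb' /sym_isE [Ht Hzt Hzs].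
case: (classic (y = inv_letter z)) => [Eyz|Nyz].
  rewrite Eyz pi_inv Ht (cdec_eq (inv_letter t)) (cdec_eq (inv_letter z)) tgt_inv src_inv Hzt Hzs; split.
    by move=> _; exists al'; split; [exact: (Hs t al' Hal) | exact: Hb'].
  move=> _; split; first exact: (Hs t al' Hal).
  by split.
rewrite (cdec_neq Nyz).
have Hb2 : phi_rel xi (t :: al') (z :: beta') by split => //; apply/sym_isE.
rewrite (phi_cons y Hb2).
case: (classic (pi y = inv_letter t)) => [Est|Nst].
  rewrite Est cdec_eq; split.
    move=> [_ [H2 H3]]; exfalso; apply: Nyz; apply: letter_ext.
    - by rewrite Est pi_inv Ht.
    - by rewrite tgt_inv H2 Hzs.
    - by rewrite src_inv H3 Hzt.
  move=> [H1 _]; exfalso; have := Hr _ H1; move/reduced_cons => [_ H].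
  exact: (H t al').
by rewrite (cdec_neq Nst).
Qed.

Lemma phi_local (A : Type) (n : nat) (xi : Defs.subset A) : convex xi ->
  forall beta, @phi A n xi beta ->
  exists xi', convex xi' /\ seteq (ball 1 (@phi A n xi')) (ball 1 (act beta (phi xi))).
Proof.
move=> Hc beta [al [Hal Hb]].
have Hcp := phi_convex n Hc; have [Hrp _ _] := Hcp.
have [Hr H0 Hs] := Hc.
have Hbr : reduced beta by apply: Hrp; exists al.
have Har := Hr _ Hal.
have Hca := convex_act Hc Hal.
exists (act al xi); split => //.
case=> [|y [|z w]].
- split=> _; split => //.
    split => //; rewrite (fmul0 Hbr); by exists al.
  by exists [::]; split => //; case: Hca.
- rewrite /ball /act (fmul1 _ Hbr) (phi_local_key y Hc Hal Hb); split.
    by case=> H _; split => //; split => //; exact: reduced1.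
  by case=> [[_ H] _].
- by rewrite /ball /=; split; case.
Qed.

Definition Hyp (A : Type) (n : nat) (psi : Defs.subset (ball_sym A n))
  (Z : word (ball_sym A n) -> Defs.subset A) : Prop :=
  convex psi /\ forall al, psi al -> convex (Z al) /\ seteq (ball 1 (@phi A n (Z al))) (ball 1 (act al psi)).

Definition zeta (A : Type) (n : nat) (psi : Defs.subset (ball_sym A n)) : Defs.subset A :=
  fun w => exists beta, psi beta /\ map (@pi A n) beta = w.

Lemma comb_red (L : Type) (y : letter L) al : reduced (y :: al) -> comb y al = y :: al.
Proof.
case: al => [//|z al] /reduced_cons [_ H] /=.
by rewrite cdec_neq //; apply: H.
Qed.

Lemma comb_inv_cons (L : Type) (z : letter L) al : comb (inv_letter z) (z :: al) = al.
Proof. by rewrite /= cdec_eq. Qed.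

Lemma nbr (A : Type) (n : nat) psi Z (H : @Hyp A n psi Z) al y : psi al ->
  (psi (comb y al) <-> Z al [:: pi y] /\ tgt y = ball n (act [:: pi y] (Z al)) /\ src y = ball n (Z al)).
Proof.
move=> Hal; have [[Hr _ _] HZ] := H; have [HcZ Hs] := HZ _ Hal.
have := Hs [:: y]; rewrite /ball /act (fmul1 _ (Hr _ Hal)) phi1 act_nil //.
move=> [H1 H2]; split.
  by move=> Hy; have [] := H2 (conj (conj (reduced1 y) Hy) (leqnn 1)).
by move=> Hy; have [[_ ?] _] := H1 (conj Hy (leqnn 1)).
Qed.

Lemma edge (A : Type) (n : nat) psi Z (H : @Hyp A n psi Z) al y : psi (y :: al) ->
  [/\ src y = ball n (Z al), tgt y = ball n (Z (y :: al)), Z al [:: pi y] &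
      ball n (Z (y :: al)) = ball n (act [:: pi y] (Z al))].
Proof.
move=> Hy; have [[Hr _ Hs] _] := H.
have Hal := Hs _ _ Hy.
have := (nbr H y Hal).1; rewrite (comb_red (Hr _ Hy)) => /(_ Hy) [H1 [H2 H3]].
have := (nbr H (inv_letter y) Hy).1; rewrite comb_inv_cons => /(_ Hal) [_ [_ H4]].
rewrite src_inv in H4.
by split => //; rewrite -H4.
Qed.

Lemma uniq_nbr (A : Type) (n : nat) psi Z (H : @Hyp A n psi Z) al y y' : psi al ->
  psi (comb y al) -> psi (comb y' al) -> pi y = pi y' -> y = y'.
Proof.
move=> Hal /(nbr H y Hal) [_ [H1 H2]] /(nbr H y' Hal) [_ [H1' H2']] E.
apply: letter_ext => //; first by rewrite H1 H1' E.
by rewrite H2 H2'.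
Qed.

Lemma map_pi_reduced (A : Type) (n : nat) psi Z (H : @Hyp A n psi Z) beta :
  psi beta -> reduced (map (@pi A n) beta).
Proof.
have [[Hr _ Hs] _] := H.
elim: beta => [//|y al IH] Hy /=.
have Hal := Hs _ _ Hy.
apply/reduced_cons; split; first exact: IH.
case: al IH Hy Hal => [//|z al'] IH Hy Hal w' w'' [Ew _] E.
have Hyal := Hy; rewrite -(comb_red (Hr _ Hyal)) in Hy.
have Hz : psi (comb (inv_letter z) (z :: al')) by rewrite comb_inv_cons; exact: Hs _ _ Hal.
have Eyz := uniq_nbr H Hal Hy Hz; rewrite pi_inv Ew E in Eyz.
have := Hr _ Hyal; move/reduced_cons => [_ Hh].
by apply: (Hh z al') => //; apply: Eyz.
Qed.

Lemma zeta_convex (A : Type) (n : nat) psi Z (H : @Hyp A n psi Z) : convex (zeta psi).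
Proof.
have [[Hr H0 Hs] _] := H.
split.
- by move=> w [beta [Hb <-]]; apply: (map_pi_reduced H).
- by exists [::].
move=> x w [[|y al] [Hb //= [_ Ew]]].
by exists al; split => //; exact: Hs _ _ Hb.
Qed.

Lemma map_pi_inj (A : Type) (n : nat) psi Z (H : @Hyp A n psi Z) beta beta' :
  psi beta -> psi beta' -> map (@pi A n) beta = map (@pi A n) beta' -> beta = beta'.
Proof.
have [[Hr H0 Hs] _] := H.
elim: beta beta' => [|y al IH] [|y' al'] // Hb Hb' E.
have E1 : pi y = pi y' := f_equal (head (pi y)) E.
have E2 : map (@pi A n) al = map (@pi A n) al' := f_equal behead E.
have Hal := Hs _ _ Hb; have Hal' := Hs _ _ Hb'.
have Ea := IH _ Hal Hal' E2; subst al'.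
congr (_ :: _); apply: (uniq_nbr H Hal); [by rewrite (comb_red (Hr _ Hb)) | by rewrite (comb_red (Hr _ Hb')) | exact: E1].
Qed.

Lemma mk_letter (A : Type) (n : nat) (xi : Defs.subset A) s : convex xi -> xi [:: s] ->
  exists y : letter (ball_sym A n), [/\ pi y = s, tgt y = ball n (act [:: s] xi) & src y = ball n xi].
Proof.
case: s => a [] Hc Hs.
  have V : exists xi0 : Defs.subset A, [/\ convex xi0, xi0 [:: (a, true)],
      ball n (act [:: (a, true)] xi) = ball n (act [:: (a, true)] xi0) & ball n xi = ball n xi0].
    by exists xi.
  by exists (@BallSym A n (ball n (act [:: (a, true)] xi)) a (ball n xi) V, true).
pose xi' := act [:: (a, false)] xi.
have V : exists xi0 : Defs.subset A, [/\ convex xi0, xi0 [:: (a, true)],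
    ball n (act [:: (a, true)] xi') = ball n (act [:: (a, true)] xi0) & ball n xi' = ball n xi0].
  exists xi'; split => //; first exact: convex_act.
  by rewrite /xi' act1 ?reduced1 //= cdec_eq; case: Hc.
exists (@BallSym A n (ball n (act [:: (a, true)] xi')) a (ball n xi') V, false); split => //.
by rewrite /src /= /xi' act_act (fmul1 _ (reduced1 _)) /= cdec_eq act_nil.
Qed.

Lemma star_key (A : Type) (n : nat) psi Z (H : @Hyp A n psi Z) al y :
  psi al -> psi (comb y al) ->
  ball n (Z (comb y al)) = ball n (act [:: pi y] (Z al)) /\
  map (@pi A n) (comb y al) = comb (pi y) (map (@pi A n) al).
Proof.
have [[Hr H0 Hs] HZ] := H.
move=> Hal Hy2.
have [Hn1 [Hn2 Hn3]] := (nbr H y Hal).1 Hy2.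
case: al Hal Hy2 Hn1 Hn2 Hn3 => [|z al0] Hal Hy2 Hn1 Hn2 Hn3.
  have [_ E _ _] := edge H Hy2; by rewrite -E Hn2.
case: (classic (y = inv_letter z)) => [Eyz|Nyz].
  subst y; rewrite comb_inv_cons pi_inv.
  have -> : map (@pi A n) (z :: al0) = pi z :: map (@pi A n) al0 by [].
  rewrite comb_inv_cons; split => //.
  have [E _ _ _] := edge H Hal; by rewrite -E -Hn2 tgt_inv.
have Ey : comb y (z :: al0) = [:: y, z & al0] by rewrite /= cdec_neq.
rewrite Ey in Hy2 *; have [_ E _ _] := edge H Hy2; split; first by rewrite -E Hn2.
rewrite /= cdec_neq // => Ep.
apply: Nyz; apply: (uniq_nbr H Hal); first by rewrite Ey.
  rewrite comb_inv_cons; exact: Hs _ _ Hal.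
by rewrite pi_inv.
Qed.

Lemma star (A : Type) (n : nat) psi Z (H : @Hyp A n psi Z) k : k <= n ->
  forall al, psi al -> forall g, reduced g -> size g <= k ->
  (Z al g <-> zeta psi (reduce (g ++ map (@pi A n) al))).
Proof.
have [[Hr H0 Hs] HZ] := H.
have Hz := zeta_convex H.
elim: k => [|k IH] Hk al Hal g Hg Hsz.
  case: g Hg Hsz => [|//] _ _ /=.
  have Hpa := map_pi_reduced H Hal; rewrite /reduced in Hpa; rewrite Hpa.
  split => _; first by exists al.
  by have [[_ ? _] _] := HZ _ Hal.
case: (leqP (size g) k) => Hsk; first exact: IH (ltnW Hk) _ Hal _ Hg Hsk.
case/lastP: g Hg Hsz Hsk => [//|g' s] Hg Hsz Hsk.
rewrite size_rcons in Hsz Hsk.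
have Hsg : size g' <= k by [].
have Hg' := reduced_rcons Hg.
have Hpa := map_pi_reduced H Hal.
have [HcZ _] := HZ _ Hal.
set pa := map (@pi A n) al in Hpa *.
have main : forall y, pi y = s -> psi (comb y al) ->
    (Z al (rcons g' s) <-> zeta psi (reduce (rcons g' s ++ pa))).
  move=> y Hy1 Hy2.
  have [K1 K2] := star_key H Hal Hy2.
  rewrite Hy1 -/pa in K1 K2.
  rewrite cat_rcons -reduce_catr reduce_cons Hpa -K2 -(IH (ltnW Hk) _ Hy2 _ Hg' Hsg).
  have E := f_equal (fun f => f g') K1; rewrite /ball /= in E.
  have Hsn : size g' <= n by apply: leq_trans (ltnW Hk).
  split.
    move=> HZg.
    have : act [:: s] (Z al) g' /\ size g' <= n.
      split => //; split => //; rewrite /fmul cats1 Hg //.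
    by rewrite -E; case.
  move=> HZg; have : Z (comb y al) g' /\ size g' <= n by [].
  by rewrite E; case=> [[_]]; rewrite /fmul cats1 Hg.
have Nex : (Z al (rcons g' s) \/ zeta psi (reduce (rcons g' s ++ pa))) ->
    exists y, pi y = s /\ psi (comb y al).
  case=> [HZg|Hzg].
    rewrite -cats1 in HZg; have Zs := convex_suffix HcZ HZg.
    have [y [E1 E2 E3]] := mk_letter n HcZ Zs.
    exists y; split => //; apply/(nbr H y Hal); rewrite E1; split => //.
  case: (classic (exists z al0, al = z :: al0 /\ s = inv_letter (pi z))) => [[z [al0 [Eal Es]]] | Nc].
    exists (inv_letter z); split; first by rewrite pi_inv Es.
    by rewrite Eal comb_inv_cons; apply: (Hs z); rewrite -Eal.
  have Hspa : reduced (s :: pa).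
    apply/reduced_cons; split => // t w Ept Est.
    apply: Nc; move: Ept; rewrite /pa; case Eal: al => [//|z al0] Ept.
    have Ez : pi z = t := f_equal (head (pi z)) Ept.
    by exists z, al0; rewrite Ez.
  have Hred := reduced_rcons_cat Hg Hspa.
  rewrite /reduced in Hred; rewrite Hred cat_rcons in Hzg.
  have [[|y al1] [Hb Em]] := convex_suffix Hz Hzg; first by [].
  have E1 : pi y = s := f_equal (head (pi y)) Em.
  have E2 : map (@pi A n) al1 = pa := f_equal behead Em.
  have Eal1 := map_pi_inj H (Hs _ _ Hb) Hal E2; subst al1.
  by exists y; split => //; rewrite (comb_red (Hr _ Hb)).
split => Hx.
  have [y [Hy1 Hy2]] := Nex (or_introl Hx); exact: (main y Hy1 Hy2).1 Hx.
have [y [Hy1 Hy2]] := Nex (or_intror Hx); exact: (main y Hy1 Hy2).2 Hx.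
Qed.

Lemma Cn_of_Hyp (A : Type) (n : nat) psi Z (H : @Hyp A n psi Z) : Cn psi.
Proof.
have [[Hr H0 Hs] HZ] := H.
have Hball : forall al, psi al -> ball n (Z al) = ball n (act (map (@pi A n) al) (zeta psi)).
  move=> al Hal; apply: functional_extensionality => g; apply: propositional_extensionality.
  rewrite /ball /act /fmul; have [[HrZ _ _] _] := HZ _ Hal; split.
    case=> Hg Hsz; split => //; split; first exact: HrZ.
    exact: (star H (leqnn n) Hal (HrZ _ Hg) Hsz).1 Hg.
  case=> [[Hg Hzg] Hsz]; split => //; exact: (star H (leqnn n) Hal Hg Hsz).2 Hzg.
have Hrel : forall beta, psi beta -> phi_rel (zeta psi) (map (@pi A n) beta) beta.
  elim=> [//|y al IH] Hb.
  have -> : map (@pi A n) (y :: al) = pi y :: map (@pi A n) al by [].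
  split; first exact: IH (Hs _ _ Hb).
  apply/sym_isE; have [E1 E2 _ _] := edge H Hb; split => //.
    by rewrite E2 Hball.
  by rewrite E1 Hball //; exact: Hs _ _ Hb.
exists (zeta psi); split; first exact: zeta_convex H.
move=> w; split.
  by move=> Hw; exists (map (@pi A n) w); split; [exists w | exact: Hrel].
case=> al [[beta [Hb Eb]] Hw]; subst al.
by rewrite (phi_rel_uniq Hw (Hrel _ Hb)).
Qed.

Definition good (A : Type) (n : nat) (B : Defs.subset (ball_sym A n)) : Prop :=
  exists xi : Defs.subset A, convex xi /\ seteq (ball 1 (@phi A n xi)) B.

Lemma seteq_sym (L : Type) (X Y : Defs.subset L) : seteq X Y -> seteq Y X.
Proof. by move=> H w; split => /H. Qed.
Lemma seteq_trans (L : Type) (X Y W : Defs.subset L) : seteq X Y -> seteq Y W -> seteq X W.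
Proof. by move=> H1 H2 w; split => [/H1/H2|/H2/H1]. Qed.

Lemma convex_seteq (L : Type) (X Y : Defs.subset L) : seteq X Y -> convex Y -> convex X.
Proof.
move=> E [H1 H2 H3]; split.
- by move=> w /E; apply: H1.
- by apply/E.
by move=> x w /E /H3 /E.
Qed.

Lemma ball_act_seteq (L : Type) (X Y : Defs.subset L) al k : seteq X Y ->
  seteq (ball k (act al X)) (ball k (act al Y)).
Proof. by move=> E w; rewrite /ball /act; split; case=> [[? /E ?] ?]. Qed.

Lemma good_seteq (A : Type) (n : nat) (B B' : Defs.subset (ball_sym A n)) :
  seteq B B' -> good B -> good B'.
Proof. move=> E [xi [Hc H]]; exists xi; split => //; exact: seteq_trans H E. Qed.

Lemma Cn_iff (A : Type) (n : nat) (psi : Defs.subset (ball_sym A n)) :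
  Cn psi <-> convex psi /\ forall al, psi al -> good (ball 1 (act al psi)).
Proof.
split.
  case=> xi [Hc E]; split; first exact: convex_seteq E (phi_convex n Hc).
  move=> al /E Hal; have [xi' [Hc' E']] := phi_local Hc Hal.
  exists xi'; split => //; apply: seteq_trans E' _.
  apply: ball_act_seteq; exact: seteq_sym.
case=> Hc Hg.
have Hex : forall al, exists Zal : Defs.subset A, psi al ->
    convex Zal /\ seteq (ball 1 (@phi A n Zal)) (ball 1 (act al psi)).
  move=> al; case: (classic (psi al)) => [Hal|Nal].
    by have [xi [H1 H2]] := Hg _ Hal; exists xi.
  by exists (fun _ => True).
pose Z := fun al => proj1_sig (constructive_indefinite_description _ (Hex al)).
apply: (@Cn_of_Hyp A n psi Z); split => // al Hal.
exact: (proj2_sig (constructive_indefinite_description _ (Hex al))).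
Qed.

Lemma cover_inj (X Y : Type) (f : X -> Y) (lY : list Y) :
  (forall x y, f x = f y -> x = y) -> exists lX : list X, forall x, List.In (f x) lY -> List.In x lX.
Proof.
move=> Hinj; elim: lY => [|y lY [lX HX]]; first by exists nil.
case: (classic (exists x0, f x0 = y)) => [[x0 Ex0]|N].
  exists (x0 :: lX) => x [Ey|Hin]; last by right; apply: HX.
  by left; apply: Hinj; rewrite Ex0 Ey.
exists lX => x [Ey|Hin]; last by apply: HX.
by exfalso; apply: N; exists x.
Qed.

Lemma cover_subsets (T : Type) (l : list T) :
  exists Qs : list (T -> Prop), forall P : T -> Prop,
    exists Q, List.In Q Qs /\ forall y, List.In y l -> (P y <-> Q y).
Proof.
elim: l => [|x l [Qs HQs]].
  by exists [:: (fun _ => True)] => P; exists (fun _ => True); split; [left|].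
exists (List.map (fun Q => fun y => y = x \/ Q y) Qs ++ List.map (fun Q => fun y => y <> x /\ Q y) Qs).
move=> P; have [Q [HQ HPQ]] := HQs P.
case: (classic (P x)) => [Px|Nx].
  exists (fun y => y = x \/ Q y); split.
    by apply/List.in_or_app; left; apply: List.in_map.
  move=> y [<-|Hy]; first by split => _; [left | exact: Px].
  case: (classic (y = x)) => [->|Nyx]; first by split => _; [left | exact: Px].
  rewrite HPQ //; split; [by right | by case].
exists (fun y => y <> x /\ Q y); split.
  by apply/List.in_or_app; right; apply: List.in_map.
move=> y [<-|Hy]; first by split => [/Nx|[]].
case: (classic (y = x)) => [->|Nyx]; first by split => [/Nx|[]].
rewrite HPQ //; split; [by [] | by case].
Qed.

Lemma in_In (T : eqType) (x : T) (s : seq T) : x \in s -> List.In x s.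
Proof. elim: s => [//|y s IH]; rewrite in_cons => /orP [/eqP ->|H]; [by left | by right; apply: IH]. Qed.

Lemma letters_cover (A : finType) : exists l : list (letter A), forall x, List.In x l.
Proof. by exists (enum (@predT (A * bool)%type)) => x; apply: in_In; rewrite mem_enum. Qed.

Lemma words_cover (A : finType) (n : nat) : exists Ws : list (word A), forall w, size w <= n -> List.In w Ws.
Proof.
have [lA HlA] := letters_cover A.
elim: n => [|n [Ws HWs]].
  by exists [:: [::]] => [[|]] //; left.
exists ([::] :: List.flat_map (fun x => List.map (cons x) Ws) lA) => [[|x w]] H; first by left.
right; apply/List.in_flat_map; exists x; split => //; apply: List.in_map; exact: HWs.
Qed.

Lemma balls_cover (A : finType) (n : nat) : exists Bs : list (Defs.subset A),
  forall P : Defs.subset A, (forall w, P w -> size w <= n) -> List.In P Bs.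
Proof.
have [Ws HWs] := words_cover A n.
have [Qs HQs] := cover_subsets Ws.
exists (List.map (fun Q => fun w => Q w /\ size w <= n) Qs) => P HP.
have [Q [HQ HPQ]] := HQs P.
have -> : P = (fun w => Q w /\ size w <= n).
  apply: functional_extensionality => w; apply: propositional_extensionality.
  case: (leqP (size w) n) => Hw.
    by rewrite -HPQ; [split; [move=> ?; split|case] | apply: HWs].
  split; first by move=> /HP ?; exfalso; lia.
  by case=> _ ?; exfalso; lia.
exact: List.in_map.
Qed.

Lemma syms_cover (A : finType) (n : nat) : exists l : list (ball_sym A n), forall r, List.In r l.
Proof.
have [Bs HBs] := balls_cover A n.
pose f := fun r : ball_sym A n => (bs_B r, bs_a r, bs_B' r).
have Hinj : forall x y, f x = f y -> x = y.
  case=> B a B' p [C a' C' q] [E1 E2 E3]; subst.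
  by rewrite (proof_irrelevance _ p q).
have [lX HX] := cover_inj (List.list_prod (List.list_prod Bs (enum A)) Bs) Hinj.
exists lX => r; apply: HX; rewrite /f.
have [xi [_ _ EB EB']] := bs_valid r.
apply/List.in_prod; first apply/List.in_prod.
- by apply: HBs => w; rewrite EB; case.
- by apply: in_In; rewrite mem_enum.
- by apply: HBs => w; rewrite EB'; case.
Qed.

Lemma sym_letters_cover (A : finType) (n : nat) :
  exists l : list (letter (ball_sym A n)), forall y, List.In y l.
Proof.
have [lL HL] := syms_cover A n.
exists (List.list_prod lL [:: true; false]) => [[r b]].
apply/List.in_prod => //; case: b; [left|right; left] => //.
Qed.

Theorem lemma3 (A : finType) (n : nat) (hn : 0 < n) :
  is_step 1 (@Cn A n).
Proof.
have [lY HlY] := sym_letters_cover A n.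
have [Qs HQs] := cover_subsets lY.
pose cand := fun Q : letter (ball_sym A n) -> Prop =>
  (fun w : word (ball_sym A n) => w = [::] \/ exists y, w = [:: y] /\ Q y).
pose p := fun B : Defs.subset (ball_sym A n) =>
  if excluded_middle_informative (good B) then false else true.
exists (List.filter p (List.map cand Qs)); split.
  move=> B /List.filter_In [/List.in_map_iff [Q [<- _]] _].
  split.
    split.
    - by move=> w [->|[y [-> _]]]; [exact: reduced_nil | exact: reduced1].
    - by left.
    - by move=> x w [//|[y [[_ ->] _]]]; left.
  by move=> w [->|[y [-> _]]].
move=> psi; rewrite Cn_iff; split.
  case=> Hc Hg; split => // B /List.filter_In [_ HB] al Hal E.
  have Hgd := good_seteq E (Hg _ Hal).
  by move: HB; rewrite /p; case: excluded_middle_informative.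
case=> Hc Hav; split => // al Hal.
have [Hr _ _] := Hc.
have [Q [HQ HPQ]] := HQs (fun y => ball 1 (act al psi) [:: y]).
have Eq : seteq (ball 1 (act al psi)) (cand Q).
  case=> [|y [|z w]].
  - split => _; first by left.
    split => //; split => //; by rewrite (fmul0 (Hr _ Hal)).
  - rewrite /cand; split.
      by move=> H; right; exists y; split => //; apply/HPQ.
    case=> [//|[y' [[<-] Hy]]]; exact: (HPQ y (HlY y)).2.
  - rewrite /cand /ball; split; first by case.
    by case=> [//|[y' [//]]].
case: (classic (good (cand Q))) => [Hgood|Nb].
  exact: good_seteq (seteq_sym Eq) Hgood.
exfalso; apply: (Hav (cand Q) _ al Hal Eq).
apply/List.filter_In; split; first exact: List.in_map.
by rewrite /p; case: excluded_middle_informative.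
Qed.
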